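(* Let $R$ be a Noetherian integral domain of Krull dimension $1$. Then every radical ideal of $R[X]$ is power stable.
   Context: An ideal $I$ of the polynomial ring $R[X]$ over an integral domain $R$ is called power stable if $I^t\cap R = (I\cap R)^t$ for all integers $t\geq 1$. *)

(* Defs.v *)
From HB Require Import structures.
From mathcomp Require Import all_boot all_order all_algebra.
Set Implicit Arguments. Unset Strict Implicit. Unset Printing Implicit Defensive.
Import Order.TTheory GRing.Theory Num.Theory.
Local Open Scope ring_scope.

Definition is_ideal (S : comNzRingType) (I : S -> Prop) : Prop :=
  [/\ I 0,
      (forall x y, I x -> I y -> I (x + y)) &
      (forall r x, I x -> I (r * x))].

Definition ideal_mul (S : comNzRingType) (I J : S -> Prop) : S -> Prop :=
  fun x => exists s : seq (S * S),
    (forall p, p \in s -> I p.1 /\ J p.2) /\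
    x = \sum_(p <- s) p.1 * p.2.

Fixpoint ideal_pow (S : comNzRingType) (I : S -> Prop) (t : nat) : S -> Prop :=
  match t with
  | 0%N => fun _ => True
  | t'.+1 => ideal_mul (ideal_pow I t') I
  end.

Definition is_radical (S : comNzRingType) (I : S -> Prop) : Prop :=
  is_ideal I /\ forall f (n : nat), I (f ^+ n) -> I f.

Definition is_prime_ideal (S : comNzRingType) (P : S -> Prop) : Prop :=
  [/\ is_ideal P, ~ P 1 & forall a b, P (a * b) -> P a \/ P b].

Definition noetherian (S : comNzRingType) : Prop :=
  forall F : nat -> S -> Prop,
    (forall n, is_ideal (F n)) ->
    (forall n x, F n x -> F n.+1 x) ->
    exists N, forall n, (N <= n)%N -> forall x, F n x <-> F N x.

Definition prime_chain (S : comNzRingType) (n : nat) (P : nat -> S -> Prop) : Prop :=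
  (forall i, (i <= n)%N -> is_prime_ideal (P i)) /\
  (forall i, (i < n)%N ->
     (forall x, P i x -> P i.+1 x) /\ exists x, P i.+1 x /\ ~ P i x).

Definition krull_dim_eq (S : comNzRingType) (n : nat) : Prop :=
  (exists P : nat -> S -> Prop, prime_chain n P) /\
  (forall m (P : nat -> S -> Prop), (n < m)%N -> ~ prime_chain m P).

Definition contract (R : comNzRingType) (I : {poly R} -> Prop) : R -> Prop :=
  fun r => I r%:P.

Definition power_stable (R : comNzRingType) (I : {poly R} -> Prop) : Prop :=
  forall t : nat, (1 <= t)%N ->
    forall r : R, contract (ideal_pow I t) r <-> ideal_pow (contract I) t r.

(* Main.v *)
From HB Require Import structures.
From mathcomp Require Import all_boot all_order all_algebra.
From Stdlib Require Import Classical ClassicalEpsilon Lia.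
Ltac nlia := repeat match goal with H : is_true (_ <= _)%N |- _ => move/ssrnat.leP: H => H end;
  try apply/ssrnat.leP; change subn with Nat.sub in *; change addn with Nat.add in *; change muln with Nat.mul in *; lia.
Require Import Defs.
Set Implicit Arguments. Unset Strict Implicit. Unset Printing Implicit Defensive.
Import Order.TTheory GRing.Theory Num.Theory.
Open Scope ring_scope.

Section Ideals.
Variable S : comNzRingType.
Implicit Types I J : S -> Prop.

Lemma ideal0 I : is_ideal I -> I 0. Proof. by case. Qed.
Lemma idealD I x y : is_ideal I -> I x -> I y -> I (x + y).
Proof. by case=> _ h _; apply h. Qed.
Lemma idealMl I r x : is_ideal I -> I x -> I (r * x).
Proof. by case=> _ _ h; apply h. Qed.
Lemma idealMr I r x : is_ideal I -> I x -> I (x * r).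
Proof. by move=> hI hx; rewrite mulrC; apply: idealMl. Qed.
Lemma idealN I x : is_ideal I -> I x -> I (- x).
Proof. by move=> hI hx; rewrite -mulN1r; apply: idealMl. Qed.
Lemma idealB I x y : is_ideal I -> I x -> I y -> I (x - y).
Proof. by move=> hI hx hy; apply: idealD => //; apply: idealN. Qed.
Lemma ideal_sum I (T : Type) (r : seq T) (P : pred T) (F : T -> S) :
  is_ideal I -> (forall i, P i -> I (F i)) -> I (\sum_(i <- r | P i) F i).
Proof.
move=> hI h; apply big_ind => //; [exact: ideal0 | move=> *; exact: idealD].
Qed.

Lemma ideal_mul_ideal I J : is_ideal I -> is_ideal (ideal_mul I J).
Proof.
move=> hI; split.
- by exists [::]; split => //; rewrite big_nil.
- move=> x y [s [hs ->]] [s' [hs' ->]]; exists (s ++ s'); split; last by rewrite big_cat.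
  by move=> p; rewrite mem_cat => /orP [] ?; [apply hs | apply hs'].
- move=> r x [s [hs ->]]; exists [seq (r * p.1, p.2) | p <- s]; split.
  + move=> p /mapP [q hq ->] /=; have [h1 h2] := hs q hq; split => //; exact: idealMl.
  + by rewrite big_map mulr_sumr; apply eq_bigr => p _; rewrite mulrA.
Qed.

Lemma ideal_pow_ideal I n : is_ideal (ideal_pow I n).
Proof.
elim: n => [|n IH] /=; first by split.
exact: ideal_mul_ideal.
Qed.

Lemma ideal_mul_in I J x y : I x -> J y -> ideal_mul I J (x * y).
Proof.
move=> hx hy; exists [:: (x, y)]; split; last by rewrite big_seq1.
by move=> p; rewrite inE => /eqP ->.
Qed.

Lemma ideal_mul_sub I J : is_ideal J -> forall x, ideal_mul I J x -> J x.
Proof.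
move=> hJ x [s [hs ->]]; rewrite big_seq; apply: ideal_sum => // p hp.
by apply: idealMl => //; exact (hs p hp).2.
Qed.

Lemma pow_in I x n : I x -> ideal_pow I n (x ^+ n).
Proof.
move=> hx; elim: n => [|n IH] //=.
by rewrite exprSr; apply: ideal_mul_in.
Qed.

Lemma pow1_in I x : I x -> ideal_pow I 1 x.
Proof. by move=> hx; rewrite /= -(mul1r x); apply: ideal_mul_in. Qed.

End Ideals.

Definition cid (R : comNzRingType) (Q : R -> Prop) (p : {poly R}) := forall i, Q p`_i.

Section Poly.
Variable R : comNzRingType.
Implicit Types Q : R -> Prop.

Lemma cidMl Q (z p : {poly R}) : is_ideal Q -> cid Q p -> cid Q (z * p).
Proof.
move=> hQ hp i; rewrite coefM; apply: ideal_sum => // j _; exact: idealMl.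
Qed.

Lemma cidD Q (p q : {poly R}) : is_ideal Q -> cid Q p -> cid Q q -> cid Q (p + q).
Proof. by move=> hQ hp hq i; rewrite coefD; apply: idealD. Qed.

Lemma cid0 Q : is_ideal Q -> cid Q 0.
Proof. by move=> hQ i; rewrite coef0; apply: ideal0. Qed.

Lemma div_exists Q (F : {poly R}) d :
  is_ideal Q -> size F = d.+1 -> F`_d = 1 ->
  forall a, cid Q a -> exists q r, [/\ cid Q q, cid Q r, a = F * q + r & (size r <= d)%N].
Proof.
move=> hQ hsF hF1 a.
have [n] := ubnP (size a); elim: n a => // n IH a hsa ha.
case: (leqP (size a) d) => hd.
  by exists 0, a; split => //; [exact: cid0 | rewrite mulr0 add0r].
set k := (size a - d.+1)%N.
set c := lead_coef a.
set a' := a - c *: ('X^k * F).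
have hc : Q c by apply: ha.
have ha' : cid Q a'.
  move=> i; rewrite coefB coefZ; apply: idealB => //; exact: idealMr.
have h0 : (0 < size a)%N by apply: leq_ltn_trans hd.
have hsa' : (size a' < n)%N.
  have hsz : (size a' <= (size a).-1)%N.
    apply/leq_sizeP => j hj.
    rewrite coefB coefZ coefXnM.
    have hkj : (k <= j)%N by rewrite /k; move: hj; rewrite -subn1 => hj; nlia.
    rewrite ltnNge hkj /=.
    have [hjj|hjj] := eqVneq j (size a).-1.
    - rewrite hjj /c lead_coefE.
      have -> : ((size a).-1 - k)%N = d by rewrite /k -subn1; nlia.
      by rewrite hF1 mulr1 subrr.
    - have -> : a`_j = 0.
        rewrite nth_default //; move: hj hjj; rewrite -subn1 => hj /eqP hjj.
        move: (size a) hj hjj => m hj hjj; nlia.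
      have -> : F`_(j - k) = 0.
        rewrite nth_default // hsF /k; move: hj hjj; rewrite -subn1 => hj /eqP hjj.
        move: (size a) hd hj hjj => m hd hj hjj; nlia.
      by rewrite mulr0 subr0.
  apply: leq_ltn_trans hsz _; move: hsa; rewrite -subn1 => hsa; nlia.
have [q' [r' [hq' hr' ea' hr'd]]] := IH a' hsa' ha'.
exists (q' + c *: 'X^k), r'; split => //.
- apply: cidD => // i; rewrite coefZ; by apply: idealMr.
- rewrite mulrDr. have -> : F * (c *: 'X^k) = c *: ('X^k * F) by rewrite -scalerAr mulrC.
  by rewrite addrAC -ea' subrK.
Qed.

Lemma rem_unique (F : {poly R}) d (q1 r1 q2 r2 : {poly R}) :
  size F = d.+1 -> F`_d = 1 -> (size r1 <= d)%N -> (size r2 <= d)%N ->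
  F * q1 + r1 = F * q2 + r2 -> r1 = r2.
Proof.
move=> hsF hF1 h1 h2 e.
have [eq|hne] := eqVneq q1 q2; first by move: e; rewrite eq => /addrI.
have mF : F \is monic by apply/monicP; rewrite lead_coefE hsF.
have e' : F * (q1 - q2) = r2 - r1.
  rewrite mulrBr.
  have -> : F * q1 = F * q2 + r2 - r1 by rewrite -e addrK.
  by rewrite (addrC (F * q2)) addrAC addrK.
have hq : q1 - q2 != 0 by rewrite subr_eq0.
have := size_monicM mF hq; rewrite e' hsF.
have : (size (r2 - r1)%R <= d)%N.
  apply: leq_trans (size_polyD _ _) _; rewrite size_polyN geq_max h1 h2 //.
move=> hs e2; move: hs; rewrite e2.
have : (0 < size (q1 - q2)%R)%N by rewrite size_poly_gt0.
move: (size (q1 - q2)%R) => m hm hs; exfalso; nlia.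
Qed.
End Poly.

Section Local.
Variable R : comNzRingType.
Variable P : R -> Prop.
Hypothesis hP : is_ideal P.
Variable F : {poly R}.
Variable d : nat.
Hypothesis hsF : size F = d.+1.
Hypothesis hF1 : F`_d = 1.

Fixpoint Aset (k : nat) (g : {poly R}) : Prop :=
  match k with
  | 0%N => True
  | k'.+1 => exists a h, [/\ cid (ideal_pow P k'.+1) a, Aset k' h & g = a + F * h]
  end.

Lemma A_ideal k : is_ideal (Aset k).
Proof.
elim: k => [|k IH] /=; first by split.
have hQ := ideal_pow_ideal P k.+1.
split.
- exists 0, 0; split; [exact: cid0 | exact: ideal0 | by rewrite mulr0 addr0].
- move=> x y [a [h [ha hh ->]]] [a' [h' [ha' hh' ->]]].
  exists (a + a'), (h + h'); split; [exact: cidD | exact: idealD | ].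
  by rewrite mulrDr addrACA.
- move=> r x [a [h [ha hh ->]]]; exists (r * a), (r * h); split.
  + exact: cidMl.
  + exact: idealMl.
  + by rewrite mulrDr mulrCA.
Qed.

Lemma A_mulP t y z : Aset t y -> cid P z -> Aset t.+1 (y * z).
Proof.
elim: t y => [|t IH] y /=.
  move=> _ hz; exists (y * z), 0; split => //; last by rewrite mulr0 addr0.
  move=> i; apply: pow1_in; exact: (@cidMl _ P y z hP hz i).
move=> [a [h [ha hh ->]]] hz.
exists (a * z), (h * z); split.
- move=> i; rewrite coefM; apply: ideal_sum; first exact: (ideal_pow_ideal P t.+2).
  move=> j _; apply: ideal_mul_in; [exact: ha | exact: hz].
- exact: IH.
- by rewrite mulrDl mulrA.
Qed.

Lemma A_pow (I : {poly R} -> Prop) : is_ideal I ->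
  (forall g, I g -> exists p q, cid P p /\ g = p + F * q) ->
  forall t g, ideal_pow I t g -> Aset t g.
Proof.
move=> hI hIF; elim=> [|t IH] g // [s [hs ->]].
rewrite big_seq; apply: (ideal_sum _ (A_ideal t.+1)).
move=> x hx; have [h1 h2] := hs x hx.
have [p [q [hp ->]]] := hIF _ h2.
rewrite mulrDr; apply: idealD; first exact: A_ideal.
- by apply: A_mulP => //; exact: IH.
- exists 0, (x.1 * q); split; [apply: cid0; exact: ideal_pow_ideal | | ].
  + apply: idealMr; [exact: A_ideal | exact: IH].
  + by rewrite add0r mulrCA.
Qed.

Lemma A_rem k g : Aset k g ->
  exists q r, [/\ cid (ideal_pow P k) r, (size r <= d)%N & g = F * q + r].
Proof.
case: k => [|k] /=.
  move=> _; have [q [r [_ hr e hs]]] := div_exists (ideal_pow_ideal P 0) hsF hF1 (a := g) (fun _ => I).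
  by exists q, r.
move=> [a [h [ha hh ->]]].
have [q [r [_ hr e hs]]] := div_exists (ideal_pow_ideal P k.+1) hsF hF1 ha.
exists (q + h), r; split => //.
by rewrite e mulrDr addrAC.
Qed.

Lemma A_const t c : (0 < d)%N -> Aset t c%:P -> ideal_pow P t c.
Proof.
move=> hd hA; have [q [r [hr hs e]]] := A_rem hA.
have e' : F * 0 + c%:P = F * q + r by rewrite mulr0 add0r.
have := rem_unique hsF hF1 _ hs e'.
rewrite (leq_trans (size_polyC_leq1 c) hd) => /(_ isT) er.
by have := hr 0%N; rewrite -er coefC.
Qed.
End Local.

Lemma ex_min (Pn : nat -> Prop) n : Pn n -> exists m, Pn m /\ forall k, Pn k -> (m <= k)%N.
Proof.
elim: n {-2}n (leqnn n) => [|N IH] n hn hPn.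
  by exists n; split => // k _; move: hn; rewrite leqn0 => /eqP ->.
case: (classic (exists k, Pn k /\ (k < n)%N)) => [[k [hk hkn]]|hno].
  by apply: (IH k) => //; nlia.
exists n; split => // k hk; rewrite leqNgt; apply/negP => hkn; apply: hno; eauto.
Qed.

Lemma cid_in_I (R : comNzRingType) (I : {poly R} -> Prop) (Q : R -> Prop) g :
  is_ideal I -> (forall x, Q x -> I x%:P) -> cid Q g -> I g.
Proof.
move=> hI hQ hg; rewrite -[g]coefK poly_def; apply: ideal_sum => // i _.
by rewrite -mul_polyC; apply: idealMr => //; apply: hQ.
Qed.

Section FExists.
Variables (R : comNzRingType) (I : {poly R} -> Prop) (P : R -> Prop) (s0 : R).
Hypotheses (hI : is_ideal I) (hP : is_ideal P)
  (hmax : forall u, ~ P u -> exists v, P (1 - u * v))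
  (hs0 : ~ P s0) (hs0P : forall x, P x -> I (s0 * x)%:P)
  (hJP : forall x, I x%:P -> P x).

Lemma F_exists : exists (F : {poly R}) d, [/\ size F = d.+1, F`_d = 1, (0 < d)%N &
   forall g, I g -> exists p q : {poly R}, cid P p /\ g = p + F * q].
Proof.
case: (classic (forall g, I g -> cid P g)) => hall.
  exists 'X, 1%N; split => //; first by rewrite size_polyX.
    by rewrite coefX.
  by move=> g hg; exists g, 0; split; [exact: hall | rewrite mulr0 addr0].
have [g0 [hg0 hng0]] : exists g, I g /\ exists i, ~ P g`_i.
  apply: NNPP => hno; apply: hall => g hg i; apply: NNPP => hi; apply: hno; eauto.
set Pn := fun n => exists g, [/\ I g, exists i, ~ P g`_i & forall i, (n < i)%N -> P g`_i].
have hPn0 : Pn (size g0).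
  exists g0; split => // i hi; rewrite nth_default; [exact: ideal0 | exact: ltnW].
have [n [[f [hf [i0 hi0] hfn]] hmin]] := ex_min hPn0.
have hfn' : ~ P f`_n.
  move=> hPf.
  have hn0 : (0 < n)%N.
    case: n hmin hfn hPf => // _ hfn hPf; exfalso; apply: hi0.
    by case: i0 => // i0; apply: hfn.
  have : Pn n.-1.
    exists f; split => //; first by exists i0.
    move=> i hi; case: (eqVneq i n) => [->//|hin]; apply: hfn.
    move/eqP: hin => hin; move: hn0 hi hin; rewrite -subn1 => hn0 hi hin; nlia.
  move/hmin; move: hn0; rewrite -subn1 => hn0 h; nlia.
have [v hv] := hmax hfn'.
set u := f`_n.
set F := 'X^n + \poly_(i < n) (v * f`_i).
have hD : cid P (F - v%:P * f).
  move=> i; rewrite coefB coefD coefXn coef_poly coefCM.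
  case: (ltngtP i n) => hin.
  - by rewrite add0r subrr; apply: ideal0.
  - rewrite add0r sub0r; apply: idealN => //; apply: idealMl => //.
    exact: hfn.
  - by rewrite addr0 hin mulrC.
have hn0 : (0 < n)%N.
  case: n hmin hfn hfn' F hD u hv => // hmin hfn hfn' F hD u hv.
  exfalso; apply: hs0; apply: hJP.
  have -> : s0%:P = s0%:P * (1 - v%:P * f) + s0%:P * (v%:P * f) by rewrite -mulrDr subrK mulr1.
  apply: idealD => //; last by do 2 apply: idealMl => //.
  apply: (@cid_in_I _ _ (fun x => I x%:P)) => //.
  move=> i; rewrite coefCM; apply: hs0P.
  rewrite coefB coefC coefCM; case: i => [|i] /=.
    by rewrite mulrC.
  rewrite sub0r; apply: idealN => //; apply: idealMl => //; exact: hfn.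
have hsF : size F = n.+1.
  rewrite size_polyDl size_polyXn //; exact: leq_ltn_trans (size_poly _ _) _.
have hF1 : F`_n = 1.
  by rewrite coefD coefXn coef_poly eqxx ltnn addr0.
exists F, n; split => // g hg.
have [q [r [_ _ eg hr]]] := div_exists (ideal_pow_ideal P 0) hsF hF1 (a := g) (fun _ => Logic.I).
exists r, q; split; last by rewrite addrC.
apply: NNPP => hnr.
have [i hi] : exists i, ~ P r`_i.
  apply: NNPP => hno; apply: hnr => i; apply: NNPP => hi; apply: hno; eauto.
have : Pn n.-1.
  exists (r + (F - v%:P * f) * q); split.
  - have -> : r + (F - v%:P * f) * q = g - v%:P * f * q.
      by rewrite eg mulrBl addrA (addrC r).
    by apply: idealB => //; apply: idealMr => //; apply: idealMl.
  - exists i => hri; apply: hi.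
    have -> : r`_i = (r + (F - v%:P * f) * q)`_i - ((F - v%:P * f) * q)`_i by rewrite coefD addrK.
    apply: idealB => //; rewrite mulrC; exact: cidMl.
  - move=> j hj; rewrite coefD nth_default ?add0r; first by rewrite mulrC; exact: cidMl.
    by apply: leq_trans hr _; move: hn0 hj; rewrite -subn1 => hn0 hj; nlia.
move/hmin; move: hn0; rewrite -subn1 => hn0 h; nlia.
Qed.
End FExists.

Section Noeth.
Variable S : comNzRingType.
Hypothesis hN : noetherian S.

Lemma max_elt (Q : (S -> Prop) -> Prop) J0 : is_ideal J0 -> Q J0 ->
  exists M, [/\ is_ideal M, Q M &
    forall M', is_ideal M' -> Q M' -> (forall x, M x -> M' x) -> forall x, M' x -> M x].
Proof.
move=> hJ0 hQ0; apply: NNPP => hno.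
pose T := {M : S -> Prop | is_ideal M /\ Q M}.
have step : forall M : T, {M' : T | (forall x, sval M x -> sval M' x) /\
                                    exists x, sval M' x /\ ~ sval M x}.
  move=> [M [hM hQ]]; apply: constructive_indefinite_description.
  apply: NNPP => h2; apply: hno; exists M; split => // M' hM' hQ' hsub x hx.
  apply: NNPP => hnx; apply: h2; exists (exist _ M' (conj hM' hQ')); split => //.
  by exists x.
pose M0 : T := exist _ J0 (conj hJ0 hQ0).
pose G := fun n => sval (iter n (fun M => sval (step M)) M0).
have [N hNN] := hN (F := G) (fun n => proj1 (svalP (iter n (fun M => sval (step M)) M0)))
  (fun n x => proj1 (svalP (step (iter n (fun M => sval (step M)) M0))) x).
have [x [hx hnx]] := proj2 (svalP (step (iter N (fun M => sval (step M)) M0))).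
by apply: hnx; apply/(hNN N.+1 (leqnSn N)).
Qed.

Definition rad (J0 : S -> Prop) : S -> Prop := fun x => exists n, J0 (x ^+ n).
Definition addp (J0 : S -> Prop) (a : S) : S -> Prop :=
  fun x => exists m r, J0 m /\ x = m + r * a.

Lemma addp_ideal J0 a : is_ideal J0 -> is_ideal (addp J0 a).
Proof.
move=> hJ; split.
- by exists 0, 0; split; [exact: ideal0 | rewrite mul0r addr0].
- move=> x y [m [r [hm ->]]] [m' [r' [hm' ->]]]; exists (m + m'), (r + r').
  by split; [exact: idealD | rewrite mulrDl addrACA].
- move=> s x [m [r [hm ->]]]; exists (s * m), (s * r).
  by split; [exact: idealMl | rewrite mulrDr mulrA].
Qed.

Lemma rad_radical J0 : is_ideal J0 -> is_radical (rad J0).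
Proof.
move=> hJ; split; last by move=> f n [k hk]; exists (n * k)%N; rewrite exprM.
split.
- by exists 1%N; rewrite expr1; exact: ideal0.
- move=> x y [n hn] [m hm]; exists (n + m)%N; rewrite exprDn; apply: ideal_sum => // i _.
  rewrite -mulr_natr; apply: idealMr => //.
  case: (leqP m i) => hi.
    have -> : y ^+ i = y ^+ (i - m) * y ^+ m by rewrite -exprD subnK.
    by rewrite mulrA; apply: idealMl.
  have -> : x ^+ (n + m - i) = x ^+ (n + m - i - n) * x ^+ n.
    by rewrite -exprD subnK //; nlia.
  by rewrite mulrAC; apply: idealMl.
- by move=> r x [n hn]; exists n; rewrite exprMn; apply: idealMl.
Qed.

Definition decomp (J : S -> Prop) := exists L : list (S -> Prop),
  (forall P, List.In P L -> is_prime_ideal P) /\ forall x, J x <-> (forall P, List.In P L -> P x).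

Lemma decomp_all J : is_radical J -> decomp J.
Proof.
move=> hJ; apply: NNPP => hno.
have [M [hMi [[_ hMr] hMd] hMmax]] :=
  @max_elt (fun M => is_radical M /\ ~ decomp M) J (proj1 hJ) (conj hJ hno).
case: (classic (M 1)) => hM1.
  apply: hMd; exists nil; split => // x; split => // _.
  by rewrite -(mulr1 x); apply: idealMl.
case: (classic (is_prime_ideal M)) => hpr.
  apply: hMd; exists [:: M]; split; first by move=> P [<-|].
  by move=> x; split; [move=> hx P [<-|] | move=> h; apply: h; left].
have [a [b [hab [ha hb]]]] : exists a b, M (a * b) /\ ~ M a /\ ~ M b.
  apply: NNPP => hno2; apply: hpr; split => // a b hab.
  apply: NNPP => hn; apply: hno2; exists a, b; split => //; split => h; apply: hn; by [left|right].
have hdec : forall c, ~ M c -> decomp (rad (addp M c)).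
  move=> c hc; apply: NNPP => hnd.
  have hrad := rad_radical (addp_ideal c hMi).
  have hsub : forall x, M x -> rad (addp M c) x.
    by move=> x hx; exists 1%N; rewrite expr1; exists x, 0; rewrite mul0r addr0.
  apply: hc; apply: (hMmax _ (proj1 hrad) (conj hrad hnd) hsub).
  by exists 1%N; rewrite expr1; exists 0, 1; rewrite mul1r add0r; split => //; exact: ideal0.
have [La [hLa eLa]] := hdec a ha.
have [Lb [hLb eLb]] := hdec b hb.
apply: hMd; exists (La ++ Lb); split.
  by move=> P /List.in_app_iff [] ?; [apply: hLa | apply: hLb].
move=> x; split.
  move=> hx P /List.in_app_iff [] hP.
  - by apply: (proj1 (eLa x) _ P hP); exists 1%N; rewrite expr1; exists x, 0; rewrite mul0r addr0.
  - by apply: (proj1 (eLb x) _ P hP); exists 1%N; rewrite expr1; exists x, 0; rewrite mul0r addr0.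
move=> hx.
have [n [m [r [hm e1]]]] : rad (addp M a) x.
  by apply/eLa => P hP; apply: hx; apply/List.in_app_iff; left.
have [k [m' [r' [hm' e2]]]] : rad (addp M b) x.
  by apply/eLb => P hP; apply: hx; apply/List.in_app_iff; right.
apply: (hMr x (n + k)%N); rewrite exprD e1 e2 mulrDl mulrDr.
apply: (idealD hMi).
  by apply: (idealD hMi); apply: (idealMr _ hMi).
rewrite mulrDr; apply: (idealD hMi); first by apply: (idealMl _ hMi).
by rewrite mulrACA; apply: (idealMl _ hMi).
Qed.
End Noeth.

Section Misc.
Variable S : comNzRingType.

Lemma prime_pow (P : S -> Prop) s n : is_prime_ideal P -> ~ P s -> ~ P (s ^+ n).
Proof.
move=> [hPi hP1 hPp] hs; elim: n => [|n IH]; first by rewrite expr0.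
by rewrite exprS => /hPp [].
Qed.

Lemma scale_pow (P J : S -> Prop) s : is_ideal J -> (forall x, P x -> J (s * x)) ->
  forall n y, ideal_pow P n y -> ideal_pow J n (s ^+ n * y).
Proof.
move=> hJ hs; elim=> [|n IH] y //= [l [hl ->]].
exists [seq (s ^+ n * p.1, s * p.2) | p <- l]; split.
  move=> p /mapP [q hq ->] /=; have [h1 h2] := hl q hq; split; [exact: IH | exact: hs].
rewrite big_map mulr_sumr; apply: eq_bigr => p _ /=.
by rewrite exprSr mulrACA.
Qed.

Lemma one_minus_pow (K : S -> Prop) k n : is_ideal K -> K k ->
  exists k', K k' /\ (1 - k) ^+ n = 1 - k'.
Proof.
move=> hK hk; elim: n => [|n [k' [hk' e]]].
  by exists 0; split; [exact: ideal0 | rewrite expr0 subr0].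
exists (k' + (1 - k') * k); split.
  by apply: idealD => //; apply: idealMl.
by rewrite exprSr e mulrBr mulr1 opprD addrA.
Qed.

Lemma avoid_list (P : S -> Prop) (L : list (S -> Prop)) : is_prime_ideal P ->
  (forall Q, List.In Q L -> is_prime_ideal Q /\ (forall u, ~ Q u -> exists v, Q (1 - u * v))) ->
  exists s, ~ P s /\ forall x, P x -> forall Q, List.In Q L -> Q (s * x).
Proof.
move=> hP; have [hPi hP1 hPp] := hP.
elim: L => [|Q L IH] hL; first by exists 1; split.
have [s [hs hsx]] := IH (fun Q' h => hL Q' (or_intror h)).
have [[hQi hQ1 hQp] hQm] := hL Q (or_introl erefl).
case: (classic (exists y, Q y /\ ~ P y)) => [[y [hy hny]]|hno].
  exists (s * y); split; first by move/hPp => [].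
  move=> x hx Q' [<-|hQ'].
    by rewrite mulrAC; apply: idealMl.
  have [[hQ'i _ _] _] := hL Q' (or_intror hQ').
  by rewrite mulrAC; apply: (idealMr _ hQ'i); exact: hsx.
have hQP : forall y, Q y -> P y by move=> y hy; apply: NNPP => hny; apply: hno; exists y.
exists s; split => // x hx Q' [<-|hQ']; last exact: hsx.
apply: idealMl => //; apply: NNPP => hnx.
have [v hv] := hQm x hnx.
apply: hP1; have -> : (1 : S) = (1 - x * v) + x * v by rewrite subrK.
by apply: idealD => //; [exact: hQP | exact: idealMr].
Qed.

Lemma unit_list (K : S -> Prop) (L : list (S -> Prop)) : is_ideal K ->
  (forall Q, List.In Q L -> is_ideal Q /\ exists s, K s /\ Q (1 - s)) ->
  exists k, K k /\ forall Q, List.In Q L -> Q (1 - k).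
Proof.
move=> hK; elim: L => [|Q L IH] hL; first by exists 0; split => //; exact: ideal0.
have [k [hk hkL]] := IH (fun Q' h => hL Q' (or_intror h)).
have [hQi [s [hs hQs]]] := hL Q (or_introl erefl).
exists (k + (1 - k) * s); split; first by apply: idealD => //; apply: idealMl.
have e : 1 - (k + (1 - k) * s) = (1 - k) * (1 - s) by rewrite mulrBr mulr1 opprD addrA.
move=> Q' [<-|hQ']; rewrite e; first exact: idealMl.
by apply: idealMr; [exact: (proj1 (hL Q' (or_intror hQ'))) | exact: hkL].
Qed.
End Misc.

Section Dim.
Variable S : idomainType.
Hypotheses (hN : noetherian S) (hK : krull_dim_eq S 1).

Lemma zero_prime : is_prime_ideal (fun x : S => x = 0).
Proof.
split.
- split => //; [by move=> x y -> ->; rewrite addr0 | by move=> r x ->; rewrite mulr0].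
- by move/eqP; rewrite oner_eq0.
- by move=> a b /eqP; rewrite mulf_eq0 => /orP [] /eqP; [left | right].
Qed.

Lemma max_prop (P : S -> Prop) x0 : is_prime_ideal P -> P x0 -> x0 != 0 ->
  forall u, ~ P u -> exists v, P (1 - u * v).
Proof.
move=> hP hx0 hx0n u hu; have [hPi hP1 hPp] := hP.
case: (classic (addp P u 1)) => [[m [r [hm e]]]|hn1].
  by exists r; have -> : 1 - u * r = m by rewrite e mulrC addrK.
have [M [hMi [hNM hM1] hMmax]] := max_elt hN
  (Q := fun M => (forall x, addp P u x -> M x) /\ ~ M 1) (addp_ideal u hPi) (conj (fun x h => h) hn1).
have hMp : is_prime_ideal M.
  split => // a b hab; case: (classic (M a)) => ha; [by left | right].
  have : addp M a 1.
    apply: NNPP => hn; apply: ha.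
    have hsub : forall x, M x -> addp M a x by move=> x hx; exists x, 0; rewrite mul0r addr0.
    apply: (hMmax _ (addp_ideal a hMi)) => //.
      by split => // x hx; apply: hsub; apply: hNM.
    by exists 0, 1; rewrite mul1r add0r; split => //; exact: ideal0.
  move=> [m [r [hm e]]]; have -> : b = m * b + r * (a * b) by rewrite mulrA -mulrDl -e mul1r.
  by apply: idealD => //; [exact: idealMr | exact: idealMl].
exfalso; apply: (hK.2 2%N (fun i : nat => if i == 0%N then (fun x : S => x = 0) else if i == 1%N then P else M)) => //.
split.
  by case=> [|[|[|i]]] //= _; exact: zero_prime.
case=> [|[|i]] //= _; split.
- by move=> x ->; exact: ideal0.
- by exists x0; split => // e; rewrite e eqxx in hx0n.
- by move=> x hx; apply: hNM; exists x, 0; rewrite mul0r addr0.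
- by exists u; split => //; apply: hNM; exists 0, 1; rewrite mul1r add0r; split => //; exact: ideal0.
Qed.
End Dim.

Lemma contr_pow (R : comNzRingType) (I : {poly R} -> Prop) t c :
  ideal_pow (contract I) t c -> ideal_pow I t c%:P.
Proof.
elim: t c => [|t IH] c //= [l [hl ->]].
exists [seq (p.1%:P, p.2%:P) | p <- l]; split.
  by move=> p /mapP [q hq ->] /=; have [h1 h2] := hl q hq; split; [exact: IH | exact: h2].
rewrite big_map rmorph_sum; apply: eq_bigr => p _ /=; by rewrite polyCM.
Qed.

Lemma pow_sub (S : comNzRingType) (I : S -> Prop) t g : is_ideal I -> (1 <= t)%N -> ideal_pow I t g -> I g.
Proof. by case: t => // t hI _; apply: ideal_mul_sub. Qed.


Lemma main_thm (R : idomainType) :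
  noetherian R -> krull_dim_eq R 1 ->
  forall I : {poly R} -> Prop, is_radical I -> power_stable I.
Proof.
move=> hN hK I [hI hIr] t ht c; split; last exact: contr_pow.
move=> hc; rewrite /contract in hc.
set J := contract I.
have hJ : is_ideal J.
  split; rewrite /J /contract.
  - by rewrite polyC0; exact: ideal0.
  - by move=> x y hx hy; rewrite polyCD; exact: idealD.
  - by move=> r x hx; rewrite polyCM; exact: idealMl.
have hJr : is_radical J.
  by split => // f n; rewrite /J /contract polyC_exp; apply: hIr.
have hcJ : J c by apply: (pow_sub hI ht).
case: (classic (exists x0, J x0 /\ x0 <> 0)) => [[x0 [hx0 hx0n]]|hno].
  2: { have -> : c = 0 by apply: NNPP => hc0; apply: hno; exists c.
       exact: ideal0 (ideal_pow_ideal _ _). }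
have [L [hLp hLe]] := decomp_all hN hJr.
have hLJ : forall P, List.In P L -> forall x, J x -> P x.
  by move=> P hP x hx; apply: (proj1 (hLe x)).
have hLm : forall P, List.In P L -> is_prime_ideal P /\ (forall u, ~ P u -> exists v, P (1 - u * v)).
  move=> P hP; split; first exact: hLp.
  apply: (max_prop hN hK (hLp P hP) (hLJ P hP x0 hx0)); exact/eqP.
pose K := fun s => ideal_pow J t (s * c).
have hKi : is_ideal K.
  have hJt := ideal_pow_ideal J t.
  split; rewrite /K.
  - by rewrite mul0r; exact: ideal0.
  - by move=> x y hx hy; rewrite mulrDl; exact: idealD.
  - by move=> r x hx; rewrite -mulrA; exact: idealMl.
have hloc : forall P, List.In P L -> is_ideal P /\ exists s, K s /\ P (1 - s).
  move=> P hP; have [hPp hPm] := hLm P hP; have [hPi hP1 hPpr] := hPp.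
  split => //.
  have [s0 [hs0 hs0x]] := avoid_list hPp (fun Q h => hLm Q h).
  have hs0J : forall x, P x -> J (s0 * x).
    by move=> x hx; apply: (proj2 (hLe _)) => Q hQ; apply: hs0x.
  have [F [d [hsF hF1 hd hIF]]] := @F_exists R I P s0 hI hPi hPm hs0 hs0J (hLJ P hP).
  have hA := A_pow hPi hI hIF hc.
  have hPt := A_const hsF hF1 hd hA.
  have hKs : K (s0 ^+ t) by rewrite /K; exact: (scale_pow hJ hs0J hPt).
  have [v hv] := hPm _ (@prime_pow _ _ _ t hPp hs0).
  exists (s0 ^+ t * v); split; first by rewrite mulrC; apply: idealMl.
  by [].
have [k [hk hkL]] := unit_list hKi hloc.
have hJk : J (1 - k) by apply: (proj2 (hLe _)).
have [k' [hk' e]] := one_minus_pow t hKi hk.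
have hK1 : K (1 - k').
  rewrite /K -e; apply: idealMr; first exact: ideal_pow_ideal.
  exact: pow_in.
have : K ((1 - k') + k') by exact: (idealD hKi hK1 hk').
by rewrite subrK /K mul1r.
Qed.

Close Scope ring_scope.

Theorem theorem3p11 (R : idomainType) :
  noetherian R -> krull_dim_eq R 1 ->
  forall I : {poly R} -> Prop, is_radical I -> power_stable I.
Proof. exact: main_thm. Qed.
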